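(* Let $0\le\alpha<n$, $m$ a nonnegative integer, $0<\eta\le1$, $0<\delta<\min\{\eta,(n-\alpha)/m\}$, $1\le r\le\infty$, $\tilde\alpha=m\delta+\alpha$, $\tilde\delta\le\delta$. Let $(w,v)$ be weights such that $v^{r'}$ satisfies a doubling condition. If there is $C$ such that for every ball $B$ with center $x_B$ $$|B|^{\frac{\delta-\tilde\delta}{n}}\Big(\int_{\mathbb{R}^n\setminus B}\frac{v^{r'}(y)}{|x_B-y|^{r'(n-\tilde\alpha+\delta)}}dy\Big)^{1/r'}\le C\frac{w(B)}{|B|},$$ then there is $C'$ such that for every ball $B$ $$|B|^{\frac{\tilde\alpha-\tilde\delta}{n}-\frac1r}\Big(\frac{1}{|B|}\int_Bv^{r'}(y)\,dy\Big)^{1/r'}\le C'\frac{w(B)}{|B|}.$$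
   Context: A weight is a nonnegative locally integrable function; $w(B)=\int_Bw$; $r'$ is the conjugate exponent of $r$. A weight $u$ is doubling if $\int_{2B}u\le C\int_Bu$ for all balls $B$, $2B$ being the concentric ball of twice the radius. If $m=0$, $(n-\alpha)/m$ is read as $+\infty$. *)

(* Defs.v *)
From HB Require Import structures.
From mathcomp Require Import all_boot all_order all_algebra.
From mathcomp Require Import all_classical all_reals all_analysis.
Set Implicit Arguments. Unset Strict Implicit. Unset Printing Implicit Defensive.
Import Order.TTheory GRing.Theory Num.Theory.
Import numFieldNormedType.Exports.
Local Open Scope classical_set_scope.
Local Open Scope ring_scope.
Local Open Scope ereal_scope.

(* R^n is modelled as n.-tuple R, with the product (Borel) sigma-algebra
   provided by mathcomp-analysis (measurable_tuple). *)

(* Lebesgue integral of a [0,+oo]-valued function on R^n, defined as the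
   iterated one-dimensional Lebesgue integral (Tonelli). *)
Fixpoint intn {R : realType} (n : nat) : (n.-tuple R -> \bar R) -> \bar R :=
  match n with
  | 0 => fun f => f [tuple]
  | n'.+1 => fun f =>
      \int[@lebesgue_measure R]_x intn (fun t : n'.-tuple R => f [tuple of x :: t])
  end.

Definition intn_on {R : realType} (n : nat) (E : set (n.-tuple R))
  (f : n.-tuple R -> \bar R) : \bar R :=
  intn (fun y => if y \in E then f y else 0).

Definition voln {R : realType} (n : nat) (E : set (n.-tuple R)) : \bar R :=
  intn_on E (fun _ => 1).

Definition nulln {R : realType} (n : nat) (N : set (n.-tuple R)) : Prop :=
  exists A : set (n.-tuple R), measurable A /\ N `<=` A /\ voln A = 0.

Definition ess_sup_on {R : realType} (n : nat) (E : set (n.-tuple R))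
  (g : n.-tuple R -> \bar R) : \bar R :=
  ereal_inf [set y : \bar R | nulln [set x | E x /\ y < g x]].

Definition euc_dist {R : realType} (n : nat) (x y : n.-tuple R) : R :=
  Num.sqrt (\sum_(i < n) (tnth x i - tnth y i) ^+ 2)%R.

Definition eball {R : realType} (n : nat) (x : n.-tuple R) (rho : R)
  : set (n.-tuple R) := [set y | (euc_dist x y < rho)%R].

Definition conj_exp {R : realType} (r : \bar R) : \bar R :=
  match r with
  | EFin r0 => if r0 == 1%R then +oo else EFin (r0 / (r0 - 1))%R
  | _ => 1
  end.

Definition inv_exp {R : realType} (r : \bar R) : R :=
  match r with
  | EFin r0 => r0^-1
  | _ => 0%R
  end.

(* Main.v *)
Require Import Defs.
From HB Require Import structures.
From mathcomp Require Import all_boot all_order all_algebra.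
From mathcomp Require Import all_classical all_reals all_analysis.
From mathcomp Require Import lra ring measurable_realfun.
Import Order.TTheory GRing.Theory Num.Theory.
Import numFieldNormedType.Exports.
Local Open Scope classical_set_scope.
Local Open Scope ring_scope.
Local Open Scope ereal_scope.
Section intlemmas.
Context (R : realType) (d : measure_display) (T : measurableType d) (mu : {measure set T -> \bar R}).
Import HBNNSimple.

Lemma int_le (f g : T -> \bar R) : (forall x, 0 <= f x) -> (forall x, f x <= g x) ->
  \int[mu]_x f x <= \int[mu]_x g x.
Proof.
move=> f0 fg.
have g0 : forall x, 0 <= g x by move=> x; exact: le_trans (f0 x) (fg x).
rewrite !ge0_integralTE//.
apply: le_ereal_sup => _ [h /= hf <-]; exists h => //= x; exact: le_trans (hf x) (fg x).
Qed.

Lemma int_scale (k : R) (f : T -> \bar R) : (0 < k)%R -> (forall x, 0 <= f x) ->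
  \int[mu]_x (k%:E * f x) <= k%:E * \int[mu]_x f x.
Proof.
move=> k0 f0.
have kf0 : forall x, 0 <= k%:E * f x by move=> x; rewrite mule_ge0// lee_fin ltW.
rewrite !ge0_integralTE//.
apply: ge_ereal_sup => _ [h /= hf <-].
have ki0 : (0 <= k^-1)%R by rewrite invr_ge0 ltW.
pose h' := scale_nnsfun h ki0.
have -> : sintegral mu h = k%:E * sintegral mu h'.
  rewrite -sintegralrM; apply: eq_sintegral => x /=.
  by rewrite mulrA divff ?mul1r// gt_eqF.
rewrite lee_pmul2l ?lte_fin//; last first.
apply: ereal_sup_ubound; exists h' => //= x.
rewrite -(@lee_pmul2l _ k%:E) ?lte_fin//; apply: le_trans (hf x).
by rewrite /h' /= -EFinM mulrA divff ?mul1r// gt_eqF.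
Qed.
End intlemmas.

Section intn_lemmas.
Context (R : realType).

Lemma intn_ge0 n (f : n.-tuple R -> \bar R) : (forall y, 0 <= f y) -> 0 <= intn f.
Proof.
elim: n f => [|n IH] f f0 /=; first exact: f0.
by apply: integral_ge0 => x _; apply: IH => y.
Qed.

Lemma intn_le n (f g : n.-tuple R -> \bar R) : (forall y, 0 <= f y) ->
  (forall y, f y <= g y) -> intn f <= intn g.
Proof.
elim: n f g => [|n IH] f g f0 fg /=; first exact: fg.
apply: int_le => x; first by apply: intn_ge0.
by apply: IH.
Qed.

Lemma intn_scale n (k : R) (f : n.-tuple R -> \bar R) : (0 < k)%R ->
  (forall y, 0 <= f y) -> intn (fun y => k%:E * f y) <= k%:E * intn f.
Proof.
move=> k0; elim: n f => [|n IH] f f0 /=; first by [].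
apply: le_trans (@int_scale R _ _ lebesgue_measure k _ k0 _); last by move=> x; apply: intn_ge0.
apply: int_le => x; first by apply: intn_ge0 => y; rewrite mule_ge0// lee_fin ltW.
exact: IH.
Qed.
End intn_lemmas.

Section cube.
Context (R : realType).

Definition cube {n} (x : n.-tuple R) (h : R) : set (n.-tuple R) :=
  fun y => forall i : 'I_n, (Num.norm (tnth y i - tnth x i) < h)%R.

Lemma forall_ordS n (P : 'I_n.+1 -> Prop) :
  (forall i, P i) <-> (P ord0 /\ forall j, P (lift ord0 j)).
Proof.
split; first by move=> H; split => *; apply: H.
by case=> H0 HS i; case: (unliftP ord0 i) => [j ->|->].
Qed.

Lemma intn_cst0 n : intn (fun _ : n.-tuple R => (0 : \bar R)) = 0.
Proof.
elim: n => [|n IH] //=.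
rewrite (_ : (fun x : R => _) = cst 0); first by rewrite integral0.
by apply: funext => x; rewrite IH.
Qed.

Lemma intn_cube n (x : n.-tuple R) (h : R) : (0 < h)%R ->
  intn (fun y => if y \in cube x h then 1 else 0) = ((2 * h) ^+ n)%:E.
Proof.
move=> h0; elim: n x => [|n IH] x /=.
  by rewrite expr0 ifT //; apply: mem_set => -[].
have [x0 [xs ->]] : exists x0 (xs : n.-tuple R), x = [tuple of x0 :: xs].
  by exists (thead x), [tuple of behead x]; exact: tuple_eta.
pose A := [set` `](x0 - h)%R, (x0 + h)%R[] : set R.
have mA : measurable A by rewrite /A; exact: measurable_itv.
have inner : forall t, intn (fun u : n.-tuple R =>
    if [tuple of t :: u] \in cube [tuple of x0 :: xs] h then 1 else 0)
   = ((2 * h) ^+ n)%:E * (\1_A t)%:E.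
  move=> t.
  have [tA|tA] := boolP (t \in A).
    rewrite indicE tA mule1 -(IH xs); congr intn; apply: funext => u.
    have [/set_mem|/negP] := boolP (u \in cube xs h) => Hu.
      rewrite ifT //; apply: mem_set; apply/forall_ordS; split.
        rewrite tnth0 tnth0; move: tA; rewrite inE /A /= in_itv /= => /andP[a b].
        rewrite ltr_norml; apply/andP; split; lra.
      by move=> j; rewrite !tnthS; apply: Hu.
    rewrite ifF //; apply: negbTE; apply/negP => /set_mem /forall_ordS [_ H]; apply: Hu; apply: mem_set => j.
    by have := H j; rewrite !tnthS.
  rewrite indicE (negbTE tA) mule0 -[RHS](intn_cst0 n); congr intn; apply: funext => u.
  rewrite ifF //; apply: negbTE; apply/negP => /set_mem /forall_ordS [H _]; move/negP: tA; apply.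
  move: H; rewrite tnth0 tnth0 ltr_norml => /andP[a b].
  rewrite inE /A /= in_itv /=; apply/andP; split.
    lra.
  lra.
rewrite (_ : (fun t => _) = fun t => ((2 * h) ^+ n)%:E * (\1_A t)%:E); last first.
  by apply: funext => t; rewrite inner.
rewrite ge0_integralZl_EFin //; last 2 first.
- by apply/measurable_EFinP; exact: measurable_indic.
- by rewrite exprn_ge0 // mulr_ge0 // ltW.
rewrite integral_indic // setIT /A.
have := lebesgue_measure_itv `](x0 - h)%R, (x0 + h)%R[.
rewrite /= ifT; last by rewrite lte_fin; lra.
move=> ->.
by rewrite -EFinD -EFinM exprS mulrC; congr (_ * _)%:E; lra.
Qed.
End cube.
Arguments cube {R n}.

Section geom.
Context (R : realType).
Local Open Scope ring_scope.

Definition sqd {n} (x y : n.-tuple R) := \sum_(i < n) (tnth x i - tnth y i) ^+ 2.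

Lemma sqd_ge0 n (x y : n.-tuple R) : 0 <= sqd x y.
Proof. by apply: sumr_ge0 => i _; exact: sqr_ge0. Qed.

Lemma dist_lt n (x y : n.-tuple R) (rho : R) : 0 < rho ->
  (euc_dist x y < rho) = (sqd x y < rho ^+ 2).
Proof.
move=> r0; rewrite /euc_dist -[X in (_ < X)](@ger0_norm _ rho) ?ltW//.
by rewrite -sqrtr_sqr ltr_sqrt // exprn_gt0.
Qed.

Lemma dist_le n (x y : n.-tuple R) (rho : R) : 0 <= rho ->
  (rho <= euc_dist x y) = (rho ^+ 2 <= sqd x y).
Proof.
move=> r0; rewrite /euc_dist -[X in (X <= _)](@ger0_norm _ rho) //.
by rewrite -sqrtr_sqr ler_sqrt // sqd_ge0.
Qed.

Lemma euc_dist_ge0 n (x y : n.-tuple R) : 0 <= euc_dist x y.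
Proof. exact: sqrtr_ge0. Qed.

Lemma cube_sub_ball n (x : n.-tuple R) (rho : R) : (0 < n)%N -> 0 < rho ->
  cube x (rho / (2 * n%:R))%R `<=` eball x rho.
Proof.
move=> n0 r0 y Hy; rewrite /eball /= dist_lt //.
have nR : 1 <= n%:R :> R by rewrite ler1n.
apply: (@le_lt_trans _ _ (\sum_(i < n) (rho / (2 * n%:R)) ^+ 2)).
  apply: ler_sum => i _.
  have := Hy i; rewrite -normrN opprB ltr_norml => /andP[a b].
  set c := rho / (2 * n%:R) in a b *; nra.
rewrite sumr_const card_ord -mulr_natr.
set c := rho / _.
have hc : rho = c * (2 * n%:R) by rewrite /c; field; lra.
have c0 : 0 < c by rewrite /c divr_gt0 //; lra.
rewrite hc; set N := n%:R in nR hc *; nra.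
Qed.

Lemma ball_sub_cube n (x : n.-tuple R) (rho : R) : 0 < rho ->
  eball x rho `<=` cube x rho.
Proof.
move=> r0 y; rewrite /eball /= => Hy i.
rewrite -normrN opprB -sqrtr_sqr.
apply: le_lt_trans Hy; rewrite /euc_dist ler_sqrt ?sqd_ge0 //.
rewrite (bigD1 i) //= lerDl; apply: sumr_ge0 => j _; exact: sqr_ge0.
Qed.
End geom.
Arguments sqd {R n}.
Arguments dist_lt {R n}.
Arguments dist_le {R n}.
Arguments cube_sub_ball {R n}.
Arguments ball_sub_cube {R n}.

Section shift.
Context (R : realType).
Local Open Scope ring_scope.

Definition shift {n} (x : n.+1.-tuple R) (rho : R) : n.+1.-tuple R :=
  [tuple (if i == ord0 then tnth x i + 2 * rho else tnth x i) | i < n.+1].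

Lemma sqd_split n (x y : n.+1.-tuple R) :
  sqd x y = (tnth x ord0 - tnth y ord0) ^+ 2 +
     \sum_(j < n) (tnth x (lift ord0 j) - tnth y (lift ord0 j)) ^+ 2.
Proof. by rewrite /sqd big_ord_recl. Qed.

Lemma sqd_shift n (x y : n.+1.-tuple R) (rho : R) :
  sqd (shift x rho) y = (tnth x ord0 + 2 * rho - tnth y ord0) ^+ 2 +
     \sum_(j < n) (tnth x (lift ord0 j) - tnth y (lift ord0 j)) ^+ 2.
Proof.
rewrite sqd_split /shift tnth_mktuple eqxx; congr (_ + _).
by apply: eq_bigr => j _; rewrite tnth_mktuple.
Qed.

Lemma shift_a n (x y : n.+1.-tuple R) (rho : R) : 0 < rho ->
  euc_dist x y < rho -> euc_dist (shift x rho) y < 4 * rho.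
Proof.
move=> r0; rewrite !dist_lt ?mulr_gt0 // sqd_shift sqd_split.
set D := \sum_(j < n) _.
have D0 : 0 <= D by apply: sumr_ge0 => j _; exact: sqr_ge0.
set a := tnth x ord0 - tnth y ord0.
rewrite (_ : tnth x ord0 + 2 * rho - tnth y ord0 = a + 2 * rho); last by rewrite /a; ring.
move=> H.
have ha : a < rho by nra.
nra.
Qed.

Lemma shift_b n (x y : n.+1.-tuple R) (rho : R) : 0 < rho ->
  euc_dist (shift x rho) y < rho -> rho <= euc_dist x y /\ euc_dist x y < 3 * rho.
Proof.
move=> r0; rewrite (dist_lt (shift x rho)) // (dist_le x y rho (ltW r0)).
rewrite (dist_lt x y) ?mulr_gt0 // sqd_shift sqd_split.
set D := \sum_(j < n) _.
have D0 : 0 <= D by apply: sumr_ge0 => j _; exact: sqr_ge0.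
set b := tnth x ord0 + 2 * rho - tnth y ord0.
rewrite (_ : tnth x ord0 - tnth y ord0 = b - 2 * rho); last by rewrite /b; ring.
move=> H.
have hb1 : b < rho by nra.
have hb2 : - rho < b by nra.
split; nra.
Qed.
End shift.
Arguments shift {R n}.
Arguments shift_a {R n x y rho}.
Arguments shift_b {R n x y rho}.

Section vol.
Context (R : realType).

Lemma intn_on_sub {n} {E F : set (n.-tuple R)} {f : n.-tuple R -> \bar R} :
  E `<=` F -> (forall y, 0 <= f y) -> intn_on E f <= intn_on F f.
Proof.
move=> EF f0; apply: intn_le => y.
  by case: ifP => // _; exact: f0.
case: ifPn => [/set_mem Ey|_]; last by case: ifP => // _; exact: f0.
by rewrite ifT //; apply: mem_set; exact: EF.
Qed.

Lemma voln_sub {n} {E F : set (n.-tuple R)} : E `<=` F -> voln E <= voln F.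
Proof. by move=> EF; apply: intn_on_sub. Qed.

Lemma voln_cube n (x : n.-tuple R) (h : R) : (0 < h)%R -> voln (cube x h) = ((2 * h) ^+ n)%:E.
Proof. by move=> h0; rewrite /voln /intn_on intn_cube. Qed.

Lemma vol_facts n (x : n.+1.-tuple R) (rho : R) : (0 < rho)%R ->
  let V := fine (voln (eball x rho)) in
  [/\ (0 < V)%R, (((n.+1)%:R ^-1) ^+ n.+1 * rho `^ (n.+1)%:R <= V)%R & voln (eball x rho) = V%:E].
Proof.
move=> r0 V.
have h0 : (0 < rho / (2 * (n.+1)%:R))%R by rewrite divr_gt0 // mulr_gt0.
have lo := voln_sub (cube_sub_ball x rho (ltn0Sn n) r0).
rewrite voln_cube // in lo.
have hi := voln_sub (ball_sub_cube x rho r0).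
rewrite voln_cube // in hi.
have fin : voln (eball x rho) = V%:E.
  rewrite /V fineK // ge0_fin_numE; first exact: le_lt_trans hi (ltry _).
  by apply: le_trans lo; rewrite lee_fin exprn_ge0 // mulr_ge0 // ltW.
rewrite fin lee_fin in lo.
have e : (2 * (rho / (2 * (n.+1)%:R)) = (n.+1)%:R^-1 * rho)%R.
  by field.
rewrite e exprMn in lo.
split => //.
  apply: lt_le_trans lo; rewrite mulr_gt0 // exprn_gt0 // invr_gt0 //.
by rewrite powR_mulrn // ltW.
Qed.
End vol.
Arguments vol_facts {R n}.

Section ess.
Context (R : realType).

Lemma ess_mono n (E F : set (n.-tuple R)) (g h : n.-tuple R -> \bar R) :
  E `<=` F -> (forall x, E x -> g x <= h x) -> ess_sup_on E g <= ess_sup_on F h.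
Proof.
move=> EF gh; apply: le_ereal_inf_tmp => y /= Hy.
apply: ereal_inf_lbound => /=.
case: Hy => A [mA [sA vA]]; exists A; split => //; split => //.
move=> t [Et yt]; apply: sA; split; first exact: EF.
exact: lt_le_trans yt (gh _ Et).
Qed.

Lemma ess_scale n (E F : set (n.-tuple R)) (g h : n.-tuple R -> \bar R) (k : R) :
  (0 < k)%R -> E `<=` F -> (forall x, E x -> g x <= k%:E * h x) ->
  ess_sup_on E g <= k%:E * ess_sup_on F h.
Proof.
move=> k0 EF gh.
rewrite -lee_pdivrMl //; apply: le_ereal_inf_tmp => y /= Hy.
rewrite lee_pdivrMl //.
apply: ereal_inf_lbound => /=.
case: Hy => A [mA [sA vA]]; exists A; split => //; split => //.
move=> t [Et yt]; apply: sA; split; first exact: EF.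
have := lt_le_trans yt (gh _ Et).
by rewrite lte_pmul2l.
Qed.

Lemma ess_ge0 n (E : set (n.-tuple R)) (g : n.-tuple R -> \bar R) :
  0 < voln E -> (forall x, 0 <= g x) -> 0 <= ess_sup_on E g.
Proof.
move=> vE g0; apply: le_ereal_inf_tmp => y /= [A [mA [sA vA]]].
rewrite leNgt; apply/negP => y0.
have : voln E <= voln A.
  apply: voln_sub => t Et; apply: sA; split => //.
  exact: lt_le_trans y0 (g0 t).
by rewrite vA leNgt vE.
Qed.
End ess.

Section key.
Context (R : realType).

Lemma mul_max (C : R) (X : \bar R) : 0 <= X -> C%:E * X <= (Num.max C 0)%:E * X.
Proof.
move=> X0; have [C0|C0] := leP C 0%R.
  by rewrite mul0e; apply: mule_le0_ge0 => //; rewrite lee_fin.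
by [].
Qed.

Lemma max_ge0 (C : R) : (0 <= Num.max C 0)%R.
Proof. by rewrite le_max lexx orbT. Qed.

Lemma key_p n (v : n.+1.-tuple R -> R) (p s Cd : R) (x : n.+1.-tuple R) (rho : R) :
  (0 < p)%R -> (0 < s)%R -> (0 < rho)%R ->
  (forall (x : n.+1.-tuple R) (rho : R), (0 < rho)%R ->
     intn_on (eball x (2 * rho)) (fun y => (v y `^ p)%:E)
       <= Cd%:E * intn_on (eball x rho) (fun y => (v y `^ p)%:E)) ->
  intn_on (eball x rho) (fun y => (v y `^ p)%:E) <=
  ((Num.max Cd 0) * (Num.max Cd 0) * (3 * rho) `^ (p * s))%:E *
  intn_on (~` eball x rho) (fun y => (v y `^ p / euc_dist x y `^ (p * s))%:E).
Proof.
move=> p0 s0 r0 DP.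
set z := shift x rho.
set g := fun y => (v y `^ p)%:E.
have g0 : forall y, 0 <= g y by move=> y; rewrite lee_fin powR_ge0.
have ig0 : forall E, 0 <= intn_on E g.
  by move=> E; apply: intn_ge0 => y; case: ifP => // _; exact: g0.
set k := ((3 * rho) `^ (p * s))%R.
have k0 : (0 < k)%R by rewrite powR_gt0 // mulr_gt0.
have step1 : intn_on (eball x rho) g <= intn_on (eball z (2 * (2 * rho))) g.
  apply: intn_on_sub => // y Hy; rewrite /eball /=.
  have -> : (2 * (2 * rho) = 4 * rho)%R by ring.
  exact: shift_a.
have step2 : intn_on (eball z (2 * (2 * rho))) g <=
    (Num.max Cd 0)%:E * ((Num.max Cd 0)%:E * intn_on (eball z rho) g).
  have r2 : (0 < 2 * rho)%R by rewrite mulr_gt0.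
  apply: le_trans (DP z _ r2) _.
  apply: le_trans (mul_max Cd _ (ig0 _)) _.
  apply: lee_wpmul2l; first by rewrite lee_fin max_ge0.
  apply: le_trans (DP z rho r0) _.
  exact: mul_max.
have step3 : intn_on (eball z rho) g <= k%:E *
    intn_on (~` eball x rho) (fun y => (v y `^ p / euc_dist x y `^ (p * s))%:E).
  have F0 : forall y, 0 <= (if y \in ~` eball x rho then (v y `^ p / euc_dist x y `^ (p * s))%:E else 0).
    by move=> y; case: ifP => // _; rewrite lee_fin divr_ge0 // powR_ge0.
  apply: le_trans (intn_scale _ _ _ _ k0 F0).
  apply: intn_le => y; first by case: ifP => // _; exact: g0.
  case: ifPn => [/set_mem Hy|_]; last first.
    by rewrite mule_ge0 // lee_fin ltW.
  have [d1 d2] := shift_b r0 Hy.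
  have d0 : (0 < euc_dist x y)%R by exact: lt_le_trans r0 d1.
  rewrite ifT; last by apply: mem_set => /=; rewrite /eball /= => H; move: d1; rewrite leNgt H.
  rewrite /g -EFinM lee_fin.
  have dk : (euc_dist x y `^ (p * s) <= k)%R.
    apply: ge0_ler_powR; rewrite ?nnegrE ?ltW ?mulr_gt0 //.
  have dp : (0 < euc_dist x y `^ (p * s))%R by rewrite powR_gt0.
  by rewrite mulrA ler_pdivlMr // (mulrC k) ler_wpM2l // powR_ge0.
rewrite /g in step1 step2 step3 *.
apply: le_trans step1 _; apply: le_trans step2 _.
rewrite !EFinM -!muleA; apply: lee_wpmul2l; first by rewrite lee_fin max_ge0.
apply: lee_wpmul2l; first by rewrite lee_fin max_ge0.
exact: step3.
Qed.
End key.

Section keye.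
Context (R : realType).

Lemma key_e n (v : n.+1.-tuple R -> R) (s Cd : R) (x : n.+1.-tuple R) (rho : R) :
  (0 < s)%R -> (0 < rho)%R -> (forall y, 0 <= v y)%R ->
  (forall (x : n.+1.-tuple R) (rho : R), (0 < rho)%R ->
     ess_sup_on (eball x (2 * rho)) (fun y => (v y)%:E)
       <= Cd%:E * ess_sup_on (eball x rho) (fun y => (v y)%:E)) ->
  ess_sup_on (eball x rho) (fun y => (v y)%:E) <=
  ((Num.max Cd 0) * (Num.max Cd 0) * (3 * rho) `^ s)%:E *
  ess_sup_on (~` eball x rho) (fun y => (v y / euc_dist x y `^ s)%:E).
Proof.
move=> s0 r0 v0 DE.
set z := shift x rho.
set g := fun y => (v y)%:E.
have g0 : forall y, 0 <= g y by move=> y; rewrite lee_fin.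
have eg0 : forall (c : n.+1.-tuple R) (t : R), (0 < t)%R -> 0 <= ess_sup_on (eball c t) g.
  move=> c t t0; apply: ess_ge0 => //.
  have [V0 _ ->] := vol_facts c t t0; by rewrite lte_fin.
set k := ((3 * rho) `^ s)%R.
have k0 : (0 < k)%R by rewrite powR_gt0 // mulr_gt0.
have step1 : ess_sup_on (eball x rho) g <= ess_sup_on (eball z (2 * (2 * rho))) g.
  apply: ess_mono => // y Hy; rewrite /eball /=.
  have -> : (2 * (2 * rho) = 4 * rho)%R by ring.
  exact: shift_a.
have step2 : ess_sup_on (eball z (2 * (2 * rho))) g <=
    (Num.max Cd 0)%:E * ((Num.max Cd 0)%:E * ess_sup_on (eball z rho) g).
  have r2 : (0 < 2 * rho)%R by rewrite mulr_gt0.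
  apply: le_trans (DE z _ r2) _.
  apply: le_trans (mul_max _ Cd _ (eg0 _ _ r2)) _.
  apply: lee_wpmul2l; first by rewrite lee_fin max_ge0.
  apply: le_trans (DE z rho r0) _.
  exact: mul_max _ _ _ (eg0 _ _ r0).
have step3 : ess_sup_on (eball z rho) g <= k%:E *
    ess_sup_on (~` eball x rho) (fun y => (v y / euc_dist x y `^ s)%:E).
  apply: ess_scale => // y Hy.
    have [d1 _] := shift_b r0 Hy.
    by rewrite /eball /= => H; move: d1; rewrite leNgt H.
  have [d1 d2] := shift_b r0 Hy.
  have d0 : (0 < euc_dist x y)%R by exact: lt_le_trans r0 d1.
  rewrite /g -EFinM lee_fin.
  have dk : (euc_dist x y `^ s <= k)%R.
    by apply: ge0_ler_powR; rewrite ?nnegrE ?ltW ?mulr_gt0 //.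
  have dp : (0 < euc_dist x y `^ s)%R by rewrite powR_gt0.
  by rewrite mulrA ler_pdivlMr // (mulrC k) ler_wpM2l.
rewrite /g in step1 step2 step3 *.
apply: le_trans step1 _; apply: le_trans step2 _.
rewrite !EFinM -!muleA; apply: lee_wpmul2l; first by rewrite lee_fin max_ge0.
apply: lee_wpmul2l; first by rewrite lee_fin max_ge0.
exact: step3.
Qed.
End keye.

Section realp.
Context (R : realType).
Local Open Scope ring_scope.

Lemma ln_pM (a b : R) : 0 < a -> 0 < b -> ln (a * b) = ln a + ln b.
Proof. by move=> a0 b0; rewrite lnM ?posrE. Qed.

Lemma ln_pV (a : R) : 0 < a -> ln (a^-1) = - ln a.
Proof. by move=> a0; rewrite lnV ?posrE. Qed.

Lemma ler_ln' (a b : R) : 0 < a -> 0 < b -> (ln a <= ln b) = (a <= b).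
Proof. by move=> a0 b0; rewrite ler_ln ?posrE. Qed.

Lemma real_p (V i j Wr rho K C c0 p e1 e2 s N : R) :
  0 < V -> 0 < rho -> 0 < i -> 0 <= j -> 0 <= K -> 0 <= Wr -> 0 < p -> 0 < c0 ->
  0 < s -> 0 < N ->
  i <= K * rho `^ (p * s) * j ->
  V `^ e1 * j `^ p^-1 <= C * (Wr * V^-1) ->
  c0 * rho `^ N <= V ->
  e2 - p^-1 - e1 = - (s / N) ->
  V `^ e2 * (V^-1 * i) `^ p^-1 <= (K `^ p^-1 * c0 `^ (- (s / N)) * Num.max C 0) * (Wr * V^-1).
Proof.
move=> V0 r0 i0 j0 K0 W0 p0 c00 s0 N0 h1 h2 h3 he.
have rp : forall a, 0 < rho `^ a by move=> a; rewrite powR_gt0.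
have jp : 0 < j.
  rewrite lt_neqAle j0 andbT; apply/negP => /eqP j00.
  by move: h1; rewrite -j00 mulr0 leNgt i0.
have Kp : 0 < K.
  rewrite lt_neqAle K0 andbT; apply/negP => /eqP K00.
  by move: h1; rewrite -K00 !mul0r leNgt i0.
have lhs2 : 0 < V `^ e1 * j `^ p^-1 by rewrite mulr_gt0 // powR_gt0.
have Cp : 0 < C.
  rewrite ltNge; apply/negP => C0.
  have : C * (Wr * V^-1) <= 0 by rewrite mulr_le0_ge0 // mulr_ge0 // invr_ge0 ltW.
  by rewrite leNgt (lt_le_trans lhs2 h2).
have Wp : 0 < Wr.
  rewrite lt_neqAle W0 andbT; apply/negP => /eqP W00.
  by move: h2; rewrite -W00 mul0r mulr0 leNgt lhs2.
rewrite (_ : Num.max C 0 = C); last by apply/max_idPl; exact: ltW.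
have Vi : 0 < V^-1 by rewrite invr_gt0.
rewrite -ler_ln'; last 2 first.
- by rewrite mulr_gt0 // powR_gt0 // mulr_gt0.
- by rewrite !mulr_gt0 // powR_gt0.
rewrite -ler_ln' in h1; last 2 first.
- by [].
- by rewrite !mulr_gt0.
rewrite -ler_ln' in h2; last 2 first.
- by [].
- by rewrite !mulr_gt0.
rewrite -ler_ln' in h3; last 2 first.
- by rewrite mulr_gt0.
- by [].
rewrite !ln_pM ?powR_gt0 ?mulr_gt0 // ln_powR in h1.
rewrite !ln_pM ?powR_gt0 ?mulr_gt0 // ?ln_pV // !ln_powR in h2.
rewrite !ln_pM ?powR_gt0 ?mulr_gt0 // ln_powR in h3.
have KQ : 0 < K `^ p^-1 by rewrite powR_gt0.
have cQ : 0 < c0 `^ (- (s / N)) by rewrite powR_gt0.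
rewrite !ln_pM ?powR_gt0 ?mulr_gt0 //.
rewrite !ln_powR ln_pM // !ln_pV //.
set q := p^-1 in he h2 *.
have qp : q * p = 1 by rewrite /q mulVf // gt_eqF.
set lV := ln V in h2 h3 *; set li := ln i in h1 *; set lj := ln j in h1 h2.
set lK := ln K in h1 *; set lr := ln rho in h1 h3; set lC := ln C in h2 *.
set lW := ln Wr in h2 *; set lc := ln c0 in h3 *.
have q0 : 0 <= q by rewrite /q invr_ge0 ltW.
have H1 := ler_wpM2l q0 h1.
have t0 : 0 <= s / N by rewrite divr_ge0 // ltW.
have H3 := ler_wpM2l t0 h3.
have E1 : q * (lK + p * s * lr + lj) = q * lK + s * lr + q * lj.
  by rewrite !mulrDr mulrA mulrA qp mul1r.
have E3 : s / N * (lc + N * lr) = s / N * lc + s * lr.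
  by rewrite mulrDr mulrA mulfVK // gt_eqF.
have E2 : e2 = e1 + q - s / N by rewrite -[e2]subr0 -(subrr (q + e1)); lra.
rewrite E1 in H1; rewrite E3 in H3; rewrite E2.
set t := s / N in H3 E2 *.
set a := q * lK in H1 *; set b := q * lj in H1 h2.
have -> : (e1 + q - t) * lV + q * (- lV + li) = e1 * lV - t * lV + q * li.
  by ring.
have -> : q * lK + - t * lc + lC + (lW + - lV) = a - t * lc + lC + lW - lV.
  by rewrite /a; ring.
set u := e1 * lV in h2 *; set tV := t * lV in H3 *; set tc := t * lc in H3 *.
set qli := q * li in H1 *.
lra.
Qed.
End realp.

Section reale.
Context (R : realType).
Local Open Scope ring_scope.

Lemma real_e (V i j Wr rho K C c0 e1 e2 s N : R) :
  0 < V -> 0 < rho -> 0 < i -> 0 <= j -> 0 <= K -> 0 <= Wr -> 0 < c0 ->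
  0 < s -> 0 < N ->
  i <= K * rho `^ s * j ->
  V `^ e1 * j <= C * (Wr * V^-1) ->
  c0 * rho `^ N <= V ->
  e2 - e1 = - (s / N) ->
  V `^ e2 * i <= (K * c0 `^ (- (s / N)) * Num.max C 0) * (Wr * V^-1).
Proof.
move=> V0 r0 i0 j0 K0 W0 c00 s0 N0 h1 h2 h3 he.
have Vi0 : 0 <= V^-1 * i by rewrite mulr_ge0 // ?invr_ge0 ltW.
have := @real_p R V i j Wr rho K C c0 1 e1 (e2 + 1) s N V0 r0 i0 j0 K0 W0 ltr01 c00 s0 N0.
rewrite invr1 !powRr1 //.
have es : (1 * s = s)%R by ring.
rewrite es; move=> /(_ h1 h2 h3).
have -> : e2 + 1 - 1 - e1 = - (s / N) by rewrite addrK.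
move=> /(_ erefl); apply: le_trans.
rewrite powRD; last by rewrite (gt_eqF V0) implybT.
by rewrite powRr1 ?(ltW V0) // -mulrA (mulrA V) mulfV ?gt_eqF // mul1r.
Qed.
End reale.

Section misc.
Context (R : realType).

Lemma conj_cases (r : \bar R) : 1 <= r ->
  (exists p : R, conj_exp r = p%:E /\ (0 < p)%R /\ inv_exp r = (1 - p^-1)%R) \/
  (conj_exp r = +oo /\ inv_exp r = 1%R).
Proof.
case: r => [r0| |] //= r1.
- rewrite lee_fin in r1.
  have [->|ne] := eqVneq r0 1%R; first by right; rewrite invr1.
  have r1' : (1 < r0)%R by rewrite lt_neqAle eq_sym ne r1.
  left; exists (r0 / (r0 - 1))%R; split => //; split.
    by rewrite divr_gt0 //; lra.
  rewrite invf_div; field; rewrite gt_eqF //; lra.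
- by left; exists 1%R; rewrite invr1 subrr; split => //; split => //; exact: ltr01.
Qed.

Lemma efin_of (x : \bar R) : 0 <= x -> x < +oo -> x = (fine x)%:E.
Proof. by move=> x0 xy; rewrite fineK // ge0_fin_numE. Qed.

Lemma lty_of_mul (a b : R) (X : \bar R) : (0 < a)%R -> 0 <= X -> a%:E * X <= b%:E -> X < +oo.
Proof.
move=> a0; case: X => [x| |] //= _; first by rewrite ltry.
by rewrite gt0_muley ?lte_fin // leye_eq.
Qed.
End misc.
Arguments efin_of {R x}.
Arguments lty_of_mul {R a b X}.
Arguments key_p {R n}.
Arguments key_e {R n}.
Arguments real_p {R}.
Arguments real_e {R}.

Theorem lemma3p5 (R : realType) (n : nat) (alpha : R) (m : nat)
  (eta delta deltat : R) (r : \bar R) (w v : n.-tuple R -> R) :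
  (0 <= alpha)%R -> (alpha < n%:R)%R ->
  (0 < eta)%R -> (eta <= 1)%R ->
  (0 < delta)%R -> (delta < eta)%R ->
  (m <> 0%N -> (delta < (n%:R - alpha) / m%:R)%R) ->
  1 <= r ->
  (deltat <= delta)%R ->
  (* (w, v) are weights: nonnegative, measurable, locally integrable *)
  (forall y, 0 <= w y)%R -> measurable_fun setT w ->
  (forall (x : n.-tuple R) (rho : R), intn_on (eball x rho) (fun y => (w y)%:E) < +oo) ->
  (forall y, 0 <= v y)%R -> measurable_fun setT v ->
  (forall (x : n.-tuple R) (rho : R), intn_on (eball x rho) (fun y => (v y)%:E) < +oo) ->
  (* v^{r'} satisfies a doubling condition *)
  (exists C : R, forall (x : n.-tuple R) (rho : R), (0 < rho)%R ->
     match conj_exp r with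
     | EFin p => intn_on (eball x (2 * rho)) (fun y => (v y `^ p)%:E)
                 <= C%:E * intn_on (eball x rho) (fun y => (v y `^ p)%:E)
     | _ => ess_sup_on (eball x (2 * rho)) (fun y => (v y)%:E)
            <= C%:E * ess_sup_on (eball x rho) (fun y => (v y)%:E)
     end) ->
  (* hypothesis of the lemma, alphat = m * delta + alpha *)
  (exists C : R, forall (x : n.-tuple R) (rho : R), (0 < rho)%R ->
     (fine (voln (eball x rho)) `^ ((delta - deltat) / n%:R))%:E *
     (match conj_exp r with
      | EFin p => (intn_on (~` eball x rho)
                    (fun y => (v y `^ p /
                      euc_dist x y `^ (p * (n%:R - (m%:R * delta + alpha) + delta)))%:E))
                  `^ p^-1
      | _ => ess_sup_on (~` eball x rho)
               (fun y => (v y / euc_dist x y `^ (n%:R - (m%:R * delta + alpha) + delta))%:E)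
      end)
     <= C%:E * (intn_on (eball x rho) (fun y => (w y)%:E)
                * ((fine (voln (eball x rho)))^-1)%:E)) ->
  exists C' : R, forall (x : n.-tuple R) (rho : R), (0 < rho)%R ->
     (fine (voln (eball x rho))
        `^ (((m%:R * delta + alpha) - deltat) / n%:R - inv_exp r))%:E *
     (match conj_exp r with
      | EFin p => (((fine (voln (eball x rho)))^-1)%:E *
                   intn_on (eball x rho) (fun y => (v y `^ p)%:E)) `^ p^-1
      | _ => ess_sup_on (eball x rho) (fun y => (v y)%:E)
      end)
     <= C'%:E * (intn_on (eball x rho) (fun y => (w y)%:E)
                 * ((fine (voln (eball x rho)))^-1)%:E).
Proof.
move=> ha0 han he0 he1 hd0 hde hdm hr hdt hw0 hmw hwl hv0 hmv hvl [Cd DBL] [C HYP].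
destruct n as [|n].
  exfalso; move: han; rewrite ltNge; move/negP; apply; exact: ha0.
set N := (n.+1)%:R%R.
have N0 : (0 < N)%R by rewrite ltr0n.
set at' := (m%:R * delta + alpha)%R.
have hat : (at' < N)%R.
  rewrite /at'; have [m0|m0] := eqVneq m 0%N.
    by rewrite m0 mul0r add0r.
  have mp : (0 < m%:R :> R)%R by rewrite ltr0n lt0n.
  have := hdm (elimN eqP m0); rewrite ltr_pdivlMr // => H; lra.
set s := (N - at' + delta)%R.
have s0 : (0 < s)%R by rewrite /s; lra.
set c0 := ((N^-1) ^+ n.+1)%R.
have c00 : (0 < c0)%R by rewrite exprn_gt0 // invr_gt0.
set Cm := Num.max Cd 0%R.
have Cm0 : (0 <= Cm)%R by exact: max_ge0.
set Cp := Num.max C 0%R.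
have Cp0 : (0 <= Cp)%R by exact: max_ge0.
case: (conj_cases _ _ hr) => [[p [hp [p0 hinv]]]|[hp hinv]]; rewrite hp hinv in HYP DBL *.
-
  set K := (Cm * Cm * 3 `^ (p * s))%R.
  have K0 : (0 <= K)%R by rewrite mulr_ge0 ?powR_ge0 // mulr_ge0.
  exists (K `^ p^-1 * c0 `^ (- (s / N)) * Cp)%R => x rho r0.
  have [V0 Vlow Veq] := vol_facts x rho r0.
  set V := fine (voln (eball x rho)) in V0 Vlow Veq *.
  have Wge : 0 <= intn_on (eball x rho) (fun y => (w y)%:E).
    by apply: intn_ge0 => y; case: ifP => // _; rewrite lee_fin.
  have WE := efin_of Wge (hwl x rho).
  set Wr := fine (intn_on (eball x rho) (fun y => (w y)%:E)) in WE.
  have KEY := key_p v p s Cd x rho p0 s0 r0 DBL.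
  have H := HYP x rho r0.
  set I := intn_on (eball x rho) (fun y => (v y `^ p)%:E) in KEY *.
  set J := intn_on (~` eball x rho) _ in KEY H.
  have I0 : 0 <= I by apply: intn_ge0 => y; case: ifP => // _; rewrite lee_fin powR_ge0.
  have J0 : 0 <= J.
    by apply: intn_ge0 => y; case: ifP => // _; rewrite lee_fin divr_ge0 // powR_ge0.
  rewrite WE -!EFinM in H *.
  rewrite -/V in H.
  have q0 : (p^-1 != 0)%R by rewrite invr_eq0 gt_eqF.
  have Wr0 : (0 <= Wr)%R by rewrite /Wr fine_ge0.
  have Vq : (0 < V `^ ((delta - deltat) / N))%R by rewrite powR_gt0.
  have Jlt : J < +oo.
    apply: (lty_poweRy q0); exact: (lty_of_mul Vq (poweR_ge0 _ _) H).
  have JE := efin_of J0 Jlt.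
  set j := fine J in JE.
  have j0 : (0 <= j)%R by rewrite /j fine_ge0.
  move: I0; rewrite le_eqVlt => /orP[/eqP I00|Ipos].
    rewrite -I00 mule0 poweR0r // mule0 lee_fin.
    by rewrite !mulr_ge0 ?powR_ge0 ?invr_ge0 // ltW.
  have Ilt : I < +oo.
    by apply: le_lt_trans KEY _; rewrite JE -EFinM ltry.
  have IE := efin_of (ltW Ipos) Ilt.
  set i := fine I in IE.
  rewrite IE in KEY Ipos *; rewrite JE in KEY H.
  rewrite -(EFinM (V^-1) i) poweR_EFin -EFinM lee_fin.
  rewrite poweR_EFin -EFinM lee_fin in H.
  rewrite -EFinM lee_fin in KEY.
  rewrite lte_fin in Ipos.
  apply: (real_p V i j Wr rho K C c0 p ((delta - deltat) / N) _ s N) => //.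
  + apply: le_trans KEY _; rewrite powRM ?ler0n ?(ltW r0) // /K.
    by rewrite /Cm le_eqVlt; apply/orP; left; apply/eqP; ring.
  + rewrite /s /N; field; by rewrite ?(gt_eqF p0) ?andbT addrC natr1 pnatr_eq0.

- (* r = 1 *)
  set K := (Cm * Cm * 3 `^ s)%R.
  have K0 : (0 <= K)%R by rewrite mulr_ge0 ?powR_ge0 // mulr_ge0.
  exists (K * c0 `^ (- (s / N)) * Cp)%R => x rho r0.
  have [V0 Vlow Veq] := vol_facts x rho r0.
  set V := fine (voln (eball x rho)) in V0 Vlow Veq *.
  have Wge : 0 <= intn_on (eball x rho) (fun y => (w y)%:E).
    by apply: intn_ge0 => y; case: ifP => // _; rewrite lee_fin.
  have WE := efin_of Wge (hwl x rho).
  set Wr := fine (intn_on (eball x rho) (fun y => (w y)%:E)) in WE.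
  have KEY := key_e v s Cd x rho s0 r0 hv0 DBL.
  have H := HYP x rho r0.
  set EB := ess_sup_on (eball x rho) _ in KEY *.
  set EC := ess_sup_on (~` eball x rho) _ in KEY H.
  rewrite WE -!EFinM in H *.
  rewrite -/V in H.
  have Wr0 : (0 <= Wr)%R by rewrite /Wr fine_ge0.
  have RHS0 : (0 <= K * c0 `^ (- (s / N)) * Cp * (Wr / V))%R.
    by rewrite !mulr_ge0 ?powR_ge0 ?invr_ge0 // ltW.
  have Vq : (0 < V `^ ((delta - deltat) / N))%R by rewrite powR_gt0.
  have KK : (0 <= Cm * Cm * (3 * rho) `^ s)%R by rewrite !mulr_ge0 ?powR_ge0.
  case: (leP EB 0) => EB0.
    apply: le_trans (_ : _ <= 0) _; last by rewrite lee_fin.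
    by apply: mule_ge0_le0 => //; rewrite lee_fin powR_ge0.
  have ECp : 0 < EC.
    rewrite ltNge; apply/negP => EC0.
    have : EB <= 0 by apply: le_trans KEY _; apply: mule_ge0_le0 => //; rewrite lee_fin.
    by rewrite leNgt EB0.
  have EClt : EC < +oo by exact: (lty_of_mul Vq (ltW ECp) H).
  have ECE := efin_of (ltW ECp) EClt.
  set ec := fine EC in ECE.
  have EBlt : EB < +oo by apply: le_lt_trans KEY _; rewrite ECE -EFinM ltry.
  have EBE := efin_of (ltW EB0) EBlt.
  set eb := fine EB in EBE.
  rewrite EBE in KEY EB0 *; rewrite ECE in KEY H ECp.
  rewrite -EFinM lee_fin.
  rewrite -EFinM lee_fin in H.
  rewrite -EFinM lee_fin in KEY.
  rewrite lte_fin in EB0 ECp.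
  apply: (real_e V eb ec Wr rho K C c0 ((delta - deltat) / N) _ s N) => //.
  + exact: ltW.
  + apply: le_trans KEY _; rewrite powRM ?ler0n ?(ltW r0) // /K.
    by rewrite /Cm le_eqVlt; apply/orP; left; apply/eqP; ring.
  + rewrite /s /N; field; by rewrite ?(gt_eqF p0) ?andbT addrC natr1 pnatr_eq0.
Qed.
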